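(* Let $C$ be an $[n,k]$ code over $\mathbb{F}_q$ with $d(C^\perp)=4$. Then $\gamma(C)\le k-2$ $(=k-d(C^\perp)+2)$.
   Context: An $[n,k]$ code over $\mathbb{F}_q$ is a $k$-dimensional subspace $C\subseteq\mathbb{F}_q^n$; write $E=\{1,\dots,n\}$. For $\bm{x}\in\mathbb{F}_q^n$, $\mathrm{supp}(\bm{x})=\{i: x_i\neq 0\}$ and the weight is $|\mathrm{supp}(\bm{x})|$; for $B\subseteq\mathbb{F}_q^n$, $\mathrm{Supp}(B)=\bigcup_{\bm{x}\in B}\mathrm{supp}(\bm{x})$. $C^\perp$ is the dual code with respect to the standard inner product and $d(C^\perp)$ is the minimum weight of a nonzero codeword of $C^\perp$. The covering dimension is $\gamma(C)=\infty$ if $\mathrm{Supp}(C)\neq E$, and otherwise $\gamma(C)$ is the least positive integer $r$ such that $C$ has an $r$-dimensional subspace $D$ with $\mathrm{Supp}(D)=E$. *)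

(* Defs.v *)
(* Codes are represented, as in mxalgebra, by the row space
   of a matrix: a linear code C <= F_q^n is a matrix C : 'M[F]_n whose row
   space is the code, and its dimension is \rank C. *)
From HB Require Import structures.
From mathcomp Require Import all_boot all_order all_algebra all_field.
Set Implicit Arguments. Unset Strict Implicit. Unset Printing Implicit Defensive.
Import GRing.Theory.
Local Open Scope ring_scope.

Section Codes.
Variables (F : finFieldType) (n : nat).

Definition supp (x : 'rV[F]_n) : {set 'I_n} := [set i | x 0 i != 0].

Definition wt (x : 'rV[F]_n) : nat := #|supp x|.

Definition Supp m (D : 'M[F]_(m, n)) : {set 'I_n} :=
  [set i | [exists x : 'rV[F]_n, (x <= D)%MS && (x 0 i != 0)]].

Definition in_dual m (C : 'M[F]_(m, n)) (y : 'rV[F]_n) : bool :=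
  [forall x : 'rV[F]_n, (x <= C)%MS ==> ((x *m y^T) 0 0 == 0)].

Definition dual_min_dist_is m (C : 'M[F]_(m, n)) (d : nat) : Prop :=
  (exists y : 'rV[F]_n, [/\ in_dual C y, y != 0 & wt y = d]) /\
  (forall y : 'rV[F]_n, in_dual C y -> y != 0 -> (d <= wt y)%N).

Definition has_covering_subspace m (C : 'M[F]_(m, n)) (r : nat) : bool :=
  [exists D : 'M[F]_(r, n),
     [&& (D <= C)%MS, \rank D == r & Supp D == setT]].

(* covering dimension: None encodes infinity.  Subspaces of F^n have
   dimension at most n, so the least positive r is searched in 1..n. *)
Definition covering_dim m (C : 'M[F]_(m, n)) : option nat :=
  if Supp C == setT then ohead [seq r <- iota 1 n | has_covering_subspace C r]
  else None.

End Codes.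

(* Main.v *)
Require Import Defs.
From Stdlib Require Import ZArith Lia Psatz.
Local Open Scope Z_scope.
Lemma arithZ (q m K S1 S2 : Z) : (2 <= q -> 1 <= m -> 0<=K -> 0 <= S1 -> 0 <= S2 -> K + 1 = q*q*q -> m + S1 = m * (q*q) -> m * m + S2 = m * (q*q + (m-1)*q) -> 2*K + S2 <= 3*S1 -> False)%Z.
Proof.
intros.
assert (0 < (q-1)*((2 * m - 2 * q - 3)^2 + 4 * q^2 - 4 * q - 1))%Z.
{ apply Z.mul_pos_pos; nia. }
nia.
Qed.

Local Close Scope Z_scope.
From HB Require Import structures.
From mathcomp Require Import all_boot all_order all_algebra all_field.
From mathcomp Require Import mxabelem zify.

Set Implicit Arguments. Unset Strict Implicit. Unset Printing Implicit Defensive.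
Import GRing.Theory.
Local Open Scope ring_scope.

Lemma arith q m K S1 S2 : (2 <= q -> 1 <= m -> K + 1 = q*q*q -> m + S1 = m * (q*q) ->
  m * m + S2 = m * (q*q + (m-1)*q) -> 2*K + S2 <= 3*S1 -> False)%N.
Proof.
case: m => [//|m] hq _; rewrite subSS subn0 => h1 h2 h3 h4.
apply: (arithZ (Z.of_nat q) (Z.of_nat m.+1) (Z.of_nat K) (Z.of_nat S1) (Z.of_nat S2)); try lia.
all: zify; nia.
Qed.

Section Proof.
Variables (F : finFieldType) (n : nat) (C : 'M[F]_n).
Hypothesis hd : forall y : 'rV[F]_n, in_dual C y -> y != 0 -> (4 <= wt y)%N.

Definition Emx m (idx : 'I_m -> 'I_n) : 'M[F]_(m, n) :=
  \matrix_(t, s) (idx t == s)%:R.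

Lemma xET m (idx : 'I_m -> 'I_n) (x : 'rV[F]_n) t :
  (x *m (Emx idx)^T) 0 t = x 0 (idx t).
Proof.
rewrite !mxE (bigD1 (idx t)) //= !mxE eqxx mulr1 big1 ?addr0 // => s /negPf hs.
by rewrite !mxE eq_sym hs mulr0.
Qed.

Lemma wET m (idx : 'I_m -> 'I_n) (w : 'rV[F]_m) s :
  (w *m Emx idx) 0 s = \sum_t w 0 t * (idx t == s)%:R.
Proof. by rewrite mxE; apply: eq_bigr => t _; rewrite mxE. Qed.

Lemma L3 m (idx : 'I_m -> 'I_n) (w : 'rV[F]_m) : (m <= 3)%N -> injective idx ->
  (forall x : 'rV[F]_n, (x <= C)%MS -> x *m (w *m Emx idx)^T = 0) -> w = 0.
Proof.
move=> hm hinj hx.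
set y := w *m Emx idx.
have hy0 : y = 0.
  apply/eqP; apply: contraT => hy.
  have hdual : in_dual C y.
    apply/forallP => x; apply/implyP => hxC.
    by rewrite (hx x hxC) mxE.
  have h2 := hd hdual hy.
  have h1 : (wt y <= m)%N.
    have hsub : supp y \subset idx @: setT.
      apply/subsetP => s; rewrite inE => hs.
      apply: contraR hs => hns; rewrite wET; apply/eqP; apply: big1 => t _.
      case: eqP => [e|]; last by rewrite mulr0.
      by case/negP: hns; rewrite -e imset_f ?inE.
    rewrite /wt; apply: leq_trans (subset_leq_card hsub) _.
    by apply: leq_trans (leq_imset_card _ _) _; rewrite cardsT card_ord.
  by have := leq_trans h2 (leq_trans h1 hm).
apply/rowP => t; rewrite mxE.
have : y 0 (idx t) = w 0 t.
  rewrite /y wET (bigD1 t) //= eqxx mulr1 big1 ?addr0 // => u hu.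
  by rewrite (inj_eq hinj) (negPf hu) mulr0.
by rewrite hy0 mxE => <-.
Qed.

Lemma colfree m a (M : 'M[F]_(a, m)) : (\rank M < m)%N ->
  exists2 w : 'rV[F]_m, w != 0 & M *m w^T = 0.
Proof.
move=> hr.
have : kermx M^T != 0.
  by rewrite -mxrank_eq0 mxrank_ker mxrank_tr -lt0n subn_gt0.
case/rowV0Pn => w; rewrite sub_kermx => /eqP hw hw0; exists w => //.
by rewrite -[M]trmxK -trmx_mul hw trmx0.
Qed.


Variable H3 : (3 <= n)%N.
Definition sel (t : 'I_3) : 'I_n := widen_ord H3 t.
Lemma sel_inj : injective sel.
Proof. by move=> a b /(congr1 val) /= /val_inj. Qed.
Definition Q : 'M[F]_(n, 3) := (Emx sel)^T.

Lemma L3C m (idx : 'I_m -> 'I_n) (w : 'rV[F]_m) : (m <= 3)%N -> injective idx ->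
  (forall x : 'rV[F]_n, (x <= C)%MS -> x *m (Emx idx)^T *m w^T = 0) -> w = 0.
Proof.
move=> hm hi hx; apply: L3 hm hi _ => x hxC.
by rewrite trmx_mul mulmxA hx.
Qed.

Lemma CQfull : row_full (C *m Q).
Proof.
rewrite /row_full; apply: contraT => hne.
have hlt : (\rank (C *m Q) < 3)%N by rewrite ltn_neqAle hne rank_leq_col.
have [w hw0 hw] := colfree hlt.
case/eqP: hw0; apply: L3C (leqnn 3) sel_inj _ => x hxC.
have -> : x *m (Emx sel)^T *m w^T = (x *m pinvmx C) *m (C *m Q *m w^T).
  have := mulmxKpV hxC; set P := pinvmx C => hP.
  by rewrite -[in LHS]hP !mulmxA.
by rewrite hw mulmx0.
Qed.

Definition X : 'M[F]_(3, n) := pinvmx (C *m Q) *m C.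
Lemma XC : (X <= C)%MS. Proof. exact: submxMl. Qed.
Lemma XQ : X *m Q = 1%:M.
Proof. by rewrite /X -mulmxA mulVpmx // CQfull. Qed.

Definition T : {set 'I_n} :=
  [set i | [forall x : 'rV[F]_n, ((x <= C)%MS && (x *m Q == 0)) ==> (x 0 i == 0)]].

Lemma Tprop i (x : 'rV[F]_n) : i \in T -> (x <= C)%MS -> x 0 i = (x *m Q *m X) 0 i.
Proof.
rewrite inE => /forallP /(_ (x - x *m Q *m X)) /implyP h hxC.
have : (x - x *m Q *m X) 0 i == 0.
  apply: h; apply/andP; split.
    apply: addmx_sub => //; rewrite (eqmx_opp (x *m Q *m X)).
    exact: submx_trans (submxMl _ _) XC.
  by rewrite mulmxBl -[x *m Q *m X *m Q]mulmxA XQ mulmx1 subrr.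
by rewrite !mxE subr_eq0 => /eqP.
Qed.

Definition phi i (f : 'rV[F]_3) := (f *m X) 0 i.

Lemma MT_rank m (idx : 'I_m -> 'I_n) : (m <= 3)%N -> injective idx ->
  (forall t, idx t \in T) -> \rank (X *m (Emx idx)^T) = m.
Proof.
move=> hm hi hT; apply/eqP; apply: contraT => hne.
have hlt : (\rank (X *m (Emx idx)^T) < m)%N by rewrite ltn_neqAle hne rank_leq_col.
have [w hw0 hw] := colfree hlt.
case/eqP: hw0; apply: L3C hm hi _ => x hxC.
have -> : x *m (Emx idx)^T = x *m Q *m (X *m (Emx idx)^T).
  by apply/rowP => t; rewrite mulmxA !xET -Tprop.
by rewrite -mulmxA hw mulmx0.
Qed.

Lemma MT_entry m (idx : 'I_m -> 'I_n) f t :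
  (f *m (X *m (Emx idx)^T)) 0 t = phi (idx t) f.
Proof. by rewrite mulmxA xET. Qed.


Lemma sum_ker m (M : 'M[F]_(3, m)) :
  (\sum_(f : 'rV[F]_3) (f *m M == 0%R : nat) = #|F| ^ (3 - \rank M))%N.
Proof.
rewrite -mxrank_ker -card_rowg -sum1_card [RHS]big_mkcond /=.
by apply: eq_bigr => f _; rewrite inE sub_kermx; case: (_ == _).
Qed.

Lemma rV0E m (v : 'rV[F]_m) : (v == 0) = [forall t, v 0 t == 0].
Proof.
apply/eqP/forallP => [-> t|h]; first by rewrite mxE.
by apply/rowP => t; rewrite mxE; apply/eqP/h.
Qed.

Definition idx1 (i : 'I_n) (t : 'I_1) := i.
Definition idx2 (i j : 'I_n) (t : 'I_2) := nth i [:: i; j] t.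
Definition idx3 (i j l : 'I_n) (t : 'I_3) := nth i [:: i; j; l] t.

Lemma idx1_inj i : injective (idx1 i).
Proof. by move=> a b _; rewrite (ord1 a) (ord1 b). Qed.
Lemma idx2_inj i j : i != j -> injective (idx2 i j).
Proof.
move=> hij [[|[|a]] ha] [[|[|b]] hb] //= e; try by apply: val_inj.
- by rewrite /idx2 /= in e; rewrite e eqxx in hij.
- by rewrite /idx2 /= in e; rewrite e eqxx in hij.
Qed.
Lemma idx3_inj i j l : i != j -> i != l -> j != l -> injective (idx3 i j l).
Proof.
move=> hij hil hjl [[|[|[|a]]] ha] [[|[|[|b]]] hb] //= e; try by apply: val_inj.
all: rewrite /idx3 /= in e.
all: by rewrite e eqxx in hij hil hjl.
Qed.

Lemma count1 i : i \in T -> (\sum_(f : 'rV[F]_3) (phi i f == 0%R : nat) = #|F| ^ 2)%N.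
Proof.
move=> hi.
have hr := MT_rank (leqnn 1 : (1 <= 3)%N) (@idx1_inj i) (fun _ => hi).
rewrite [X in (_ ^ X)%N](_ : 2 = 3 - \rank (X *m (Emx (idx1 i))^T))%N; last by rewrite hr.
rewrite -sum_ker; apply: eq_bigr => f _; congr nat_of_bool.
rewrite rV0E; apply/idP/forallP => [h t|/(_ ord0)]; by rewrite MT_entry.
Qed.

Lemma count2 i j : i \in T -> j \in T -> i != j ->
  (\sum_(f : 'rV[F]_3) ((phi i f == 0%R) * (phi j f == 0%R) : nat) = #|F|)%N.
Proof.
move=> hi hj hij.
have hT : forall t, idx2 i j t \in T by case=> [[|[|]]] //=.
have hr := MT_rank (isT : (2 <= 3)%N) (idx2_inj hij) hT.
rewrite -[X in (_ = X)%N]expn1 [X in (_ ^ X)%N](_ : 1 = 3 - \rank (X *m (Emx (idx2 i j))^T))%N; last by rewrite hr.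
rewrite -sum_ker.
apply: eq_bigr => f _.
have -> : ((phi i f == 0%R) * (phi j f == 0%R) = ((phi i f == 0%R) && (phi j f == 0%R)) :> nat)%N.
  by case: (phi i f == 0); case: (phi j f == 0).
congr nat_of_bool.
rewrite rV0E; apply/andP/forallP => [[h1 h2] t|h].
  rewrite MT_entry; case: t => [[|[|]]] //=.
by split; [have := h ord0 | have := h ord_max]; rewrite MT_entry.
Qed.


Lemma N_le2 f : f != 0 -> (#|[set i in T | phi i f == 0%R]| <= 2)%N.
Proof.
move=> hf; rewrite leqNgt; apply/negP => h3.
set S := [set i in T | phi i f == 0%R] in h3.
have [i hi] : exists i, i \in S by apply/card_gt0P; apply: leq_trans h3.
have h2 : (1 < #|S :\ i|)%N by move: h3; rewrite (cardsD1 i S) hi.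
have [j hj] : exists j, j \in S :\ i by apply/card_gt0P; apply: ltnW.
have h1 : (0 < #|S :\ i :\ j|)%N by move: h2; rewrite (cardsD1 j (S :\ i)) hj.
have [l hl] : exists l, l \in S :\ i :\ j by apply/card_gt0P.
move: hl hj hi; rewrite !inE => /and3P [hlj hli /andP [hlT hl0]] /and3P [hji hjT hj0] /andP [hiT hi0].
have {hiT}hiT : i \in T by rewrite inE.
have {hjT}hjT : j \in T by rewrite inE.
have {hlT}hlT : l \in T by rewrite inE.
have hT : forall t, idx3 i j l t \in T by case=> [[|[|[|]]]] //=.
have hij : i != j by rewrite eq_sym.
have hil : i != l by rewrite eq_sym.
have hjl : j != l by rewrite eq_sym.
have hr := MT_rank (leqnn 3) (idx3_inj hij hil hjl) hT.
have hfree : row_free (X *m (Emx (idx3 i j l))^T) by rewrite /row_free hr.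
have : (f <= kermx (X *m (Emx (idx3 i j l))^T))%MS.
  rewrite sub_kermx rV0E; apply/forallP => t; rewrite MT_entry.
  by case: t => [[|[|[|]]]] //=.
move: hfree; rewrite -kermx_eq0 => /eqP ->; rewrite submx0.
by rewrite (negPf hf).
Qed.

Definition Nf f := #|[set i in T | phi i f == 0%R]|.

Lemma NfE f : Nf f = (\sum_(i in T) (phi i f == 0%R : nat))%N.
Proof.
rewrite /Nf -sum1_card [LHS]big_mkcond [RHS]big_mkcond /=.
by apply: eq_bigr => i _; rewrite in_set; case: (i \in T); case: (phi i f == 0%R).
Qed.

Lemma sumS1 : (\sum_(f : 'rV[F]_3) Nf f = #|T| * #|F| ^ 2)%N.
Proof.
under eq_bigr => f _ do rewrite NfE.
rewrite exchange_big /= -sum_nat_const; apply: eq_bigr => i hi.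
exact: count1.
Qed.

Lemma sumS2 : (\sum_(f : 'rV[F]_3) Nf f * Nf f =
   #|T| * (#|F| ^ 2 + (#|T| - 1) * #|F|))%N.
Proof.
under eq_bigr => f _ do rewrite NfE big_distrlr /=.
rewrite exchange_big /= -sum_nat_const; apply: eq_bigr => i hi.
rewrite exchange_big /= (bigD1 i) //=.
congr addn.
  rewrite -(count1 hi); apply: eq_bigr => f _.
  by case: (phi i f == 0%R).
rewrite (eq_bigr (fun _ => #|F|)); last first.
  by move=> j /andP [hj hji]; apply: count2 => //; rewrite eq_sym.
rewrite (eq_bigl (fun j => j \in [predD1 T & i])); last by move=> j; rewrite !inE andbC.
rewrite sum_nat_const; congr muln.
by rewrite (cardD1 i T) hi add1n subSS subn0.
Qed.


Lemma Nf0 : Nf 0 = #|T|.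
Proof.
rewrite NfE -sum1_card; apply: eq_bigr => i _.
by rewrite /phi mul0mx mxE eqxx.
Qed.

Lemma T_gt0 : (0 < #|T|)%N.
Proof.
apply/card_gt0P; exists (sel ord0); rewrite inE; apply/forallP => x.
apply/implyP => /andP [_ /eqP hx].
by have := xET sel x ord0; rewrite -/Q hx mxE => <-.
Qed.

Lemma good : exists2 f : 'rV[F]_3, f != 0 & forall i, i \in T -> phi i f != 0.
Proof.
case: (boolP [exists f : 'rV[F]_3, (f != 0) && [forall i in T, phi i f != 0]]).
  case/existsP => f /andP [hf /forall_inP h]; by exists f.
rewrite negb_exists => /forallP hno.
have hN f : f != 0 -> (1 <= Nf f <= 2)%N.
  move=> hf; rewrite N_le2 // andbT.
  have := hno f; rewrite hf /= negb_forall_in => /exists_inP [i hi].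
  rewrite negbK => hi0.
  by apply/card_gt0P; exists i; rewrite in_set hi hi0.
set q := #|F|; set m := #|T|.
have hS1 := sumS1; have hS2 := sumS2.
rewrite (bigD1 0) //= Nf0 -/q -/m in hS1.
rewrite (bigD1 0) //= Nf0 -/q -/m in hS2.
have hK : (\sum_(f : 'rV[F]_3 | f != 0%R) 1 + 1 = q * q * q)%N.
  have := card_mx F 1 3; rewrite -sum1_card (bigD1 0) //= addnC => ->.
  by rewrite mul1n -/q expnS expnS expn1 mulnA.
have hineq : (\sum_(f : 'rV[F]_3 | f != 0%R) (2 + Nf f * Nf f) <=
              \sum_(f : 'rV[F]_3 | f != 0%R) 3 * Nf f)%N.
  apply: leq_sum => f hf; have := hN f hf.
  by case: (Nf f) => [|[|[|]]].
have h2K : (\sum_(f : 'rV[F]_3 | f != 0%R) 2 = 2 * \sum_(f : 'rV[F]_3 | f != 0%R) 1)%N.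
  by rewrite big_distrr /=; apply: eq_bigr => *; rewrite muln1.
rewrite big_split /= -big_distrr /= h2K in hineq.
exfalso; apply: (arith (q := q) (m := m) (K := \sum_(f : 'rV[F]_3 | f != 0%R) 1)
          (S1 := \sum_(f : 'rV[F]_3 | f != 0%R) Nf f)
          (S2 := \sum_(f : 'rV[F]_3 | f != 0%R) Nf f * Nf f)) => //.
- exact: card_finNzRing_gt1.
- exact: T_gt0.
all: try by rewrite hS1 mulnA.
all: try by rewrite hS2.
Qed.


Lemma covering : exists D : 'M[F]_n,
  [/\ (D <= C)%MS, (\rank D <= \rank C - 2)%N & Supp D = setT].
Proof.
have [f hf hgood] := good.
set B := Q *m cokermx f.
exists (C :&: kermx B)%MS; split.
- exact: capmxSl.
- have := mxrank_mul_ker C B.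
  have hc : (cokermx f <= C *m B)%MS.
    have -> : cokermx f = X *m B by rewrite /B mulmxA XQ mul1mx.
    exact: submxMr XC.
  have := mxrankS hc; rewrite mxrank_coker rank_rV hf.
  move=> h1 h2; have h1p : (2 <= \rank (C *m B))%N by exact: h1.
  by rewrite -h2 addnC -addnBA // leq_addr.
- apply/setP => i; rewrite !inE; apply/existsP.
  case hiT: (i \in T).
    exists (f *m X); rewrite sub_capmx (submx_trans (submxMl f X) XC) /=.
    rewrite sub_kermx /B mulmxA -(mulmxA f X Q) XQ mulmx1 mulmx_coker eqxx /=.
    exact: hgood.
  move: hiT; rewrite inE => /negbT; rewrite negb_forall => /existsP [x].
  rewrite negb_imply => /andP [/andP [hxC hxQ] hxi].
  exists x; rewrite sub_capmx hxC sub_kermx /B mulmxA (eqP hxQ) mul0mx eqxx.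
  exact: hxi.
Qed.

End Proof.

Lemma Supp_eq (F : finFieldType) n m1 m2 (A : 'M[F]_(m1, n)) (B : 'M[F]_(m2, n)) :
  (A :=: B)%MS -> Supp A = Supp B.
Proof.
move=> eqAB; apply/setP => i; rewrite !inE.
by apply: eq_existsb => x; rewrite eqAB.
Qed.

Lemma ohead_filter (p : pred nat) a b r : (a <= r)%N -> (r < a + b)%N -> p r ->
  exists g, ohead [seq x <- iota a b | p x] = Some g /\ (g <= r)%N.
Proof.
elim: b a => [|b IH] a har hrb hp; first by move: hrb; rewrite addn0 ltnNge har.
rewrite /=; case: (boolP (p a)) => hpa.
  by exists a; split.
apply: IH => //; last by rewrite addSnnS.
rewrite ltn_neqAle har andbT; apply: contraNneq hpa => ->; exact: hp.
Qed.

Theorem mainTheorem11 (F : finFieldType) (n k : nat) (C : 'M[F]_n) :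
  \rank C = k ->
  dual_min_dist_is C 4 ->
  exists g : nat, covering_dim C = Some g /\ (g <= k - 2)%N.
Proof.
move=> hk [[y [hy hy0 hwy]] hd].
have hn : (3 <= n)%N.
  have : (wt y <= n)%N by rewrite /wt -[X in (_ <= X)%N]card_ord max_card.
  by rewrite hwy; apply: leq_trans.
have [D [hDC hDr hDS]] := covering hd hn.
have hn0 : (0 < n)%N by apply: leq_trans hn.
have hD0 : (0 < \rank D)%N.
  have : Ordinal hn0 \in Supp D by rewrite hDS inE.
  rewrite inE => /existsP [x /andP [hxD hx]].
  rewrite lt0n mxrank_eq0; apply: contraNneq hx => hD0.
  by move: hxD; rewrite hD0 submx0 => /eqP ->; rewrite mxE.
have hcov : has_covering_subspace C (\rank D).
  apply/existsP; exists (row_base D).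
  by rewrite !(eq_row_base D) hDC eqxx (Supp_eq (eq_row_base D)) hDS eqxx.
have hSC : Supp C = setT.
  apply/eqP; rewrite eqEsubset subsetT /= -hDS; apply/subsetP => i; rewrite !inE.
  case/existsP => x /andP [hx hxi]; apply/existsP; exists x; rewrite hxi andbT.
  exact: submx_trans hDC.
rewrite /covering_dim hSC eqxx.
have hrn : (\rank D < 1 + n)%N by rewrite add1n ltnS rank_leq_col.
have [g [hg hgr]] := @ohead_filter (has_covering_subspace C) 1 n (\rank D) hD0 hrn hcov.
exists g; split => //; rewrite -hk; exact: leq_trans hgr hDr.
Qed.
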